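(* For integers $n,m$, the inequality \[ \sin(\pi/m)\,\cosh\!\left(\operatorname{arccosh}\!\left(\frac{\cos(\pi/m)}{\sin(\pi/n)}\right)+\operatorname{arccosh}\bigl(\cot(\pi/m)\cot(\pi/n)\bigr)\right) > \cosh(\log n) \] holds whenever $n\ge 5, m\ge 6$; or $n\ge 7, m\ge 4$. *)

(* Defs.v *)
From Stdlib Require Export Reals.
Open Scope R_scope.

Definition arccosh (x : R) : R := ln (x + sqrt (x ^ 2 - 1)).

Definition cot (x : R) : R := cos x / sin x.

(* Main.v *)
Require Import Defs.
From Stdlib Require Import Reals Lra Lia Psatz.
Open Scope R_scope.

Lemma PI_lt : PI < 16/5.
Proof.
destruct (Rlt_or_le PI (16/5)) as [h|h]; [exact h|exfalso].
assert (h1 : cos (8/5) <= cos_ub (8/5)).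
{ apply (COS (8/5)); lra. }
assert (h2 : 0 <= cos (8/5)) by (apply cos_ge_0; lra).
assert (F : forall k, INR (Factorial.fact (S k)) = INR (S k) * INR (Factorial.fact k)).
{ intro k. rewrite <- mult_INR. reflexivity. }
unfold cos_ub, cos_approx, cos_term in h1. cbn [sum_f_R0 Nat.mul Nat.add] in h1.
rewrite !F in h1. change (Factorial.fact 0) with 1%nat in h1.
rewrite !S_INR in h1. simpl INR in h1. simpl pow in h1.
lra.
Qed.

Lemma cos_le_mono x y : 0 <= x -> x <= y -> y <= PI -> cos y <= cos x.
Proof.
intros h0 h1 h2. destruct (Req_dec x y) as [->|hne]; [lra|].
left. apply cos_decreasing_1; lra.
Qed.

Lemma div_le_PI (k : R) (N : R) : 0 < k -> k <= N -> PI / N <= PI / k.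
Proof.
intros hk hN. unfold Rdiv. apply Rmult_le_compat_l. pose proof PI_RGT_0; lra.
apply Rinv_le_contravar; lra.
Qed.

Lemma one_minus_cos_le b : 0 < b -> b < PI -> 1 - cos b <= b * b / 2.
Proof.
intros h0 h1.
replace b with (2 * (b/2)) at 1 by field.
rewrite cos_2a_sin.
assert (hs : 0 < sin (b/2)) by (apply sin_gt_0; lra).
assert (hl : sin (b/2) < b/2) by (apply sin_lt_x; lra).
nra.
Qed.

Lemma main_ineq (N c2 cb : R) :
  ((5 <= N /\ 3/4 <= c2) \/ (7 <= N /\ 1/2 <= c2)) ->
  1 - cb <= (PI / N) * (PI / N) / 2 ->
  (1 - cb) * (N + 1) ^ 2 < 2 * N * c2.
Proof.
intros hc hb.
pose proof PI_lt as hpi. pose proof PI_RGT_0 as hp0.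
assert (hN : 5 <= N) by lra.
assert (hpi2 : PI * PI < 256/25) by nra.
assert (h1 : 1 - cb <= (256/25) / (2 * N * N)).
{ apply Rle_trans with (1 := hb).
  replace (PI / N * (PI / N) / 2) with ((PI*PI) / (2 * N * N)) by (field; lra).
  unfold Rdiv. apply Rmult_le_compat_r. left; apply Rinv_0_lt_compat; nra. lra. }
assert (h2 : (1 - cb) * (2 * N * N) <= 256/25).
{ replace (256/25) with ((256/25) / (2 * N * N) * (2 * N * N)) by (field; lra).
  apply Rmult_le_compat_r; nra. }
assert (h3 : 256/25 * (N+1)^2 < 2 * N * c2 * (2 * N * N)).
{ destruct hc as [[hn hc]|[hn hc]].
  - assert (0 <= N - 5) by lra.
    assert (0 <= (N-5)*(N-5)) by nra.
    assert (0 <= (N-5)*(N-5)*(N-5)) by nra.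
    assert (4 * N * N * N * (c2 - 3/4) >= 0) by (apply Rle_ge; apply Rmult_le_pos; nra).
    nra.
  - assert (0 <= N - 7) by lra.
    assert (0 <= (N-7)*(N-7)) by nra.
    assert (0 <= (N-7)*(N-7)*(N-7)) by nra.
    assert (4 * N * N * N * (c2 - 1/2) >= 0) by (apply Rle_ge; apply Rmult_le_pos; nra).
    nra. }
assert (h4 : (1 - cb) * (N + 1) ^ 2 * (2 * N * N) <= 256/25 * (N+1)^2).
{ replace ((1 - cb) * (N + 1) ^ 2 * (2 * N * N)) with ((1 - cb) * (2 * N * N) * (N+1)^2) by ring.
  apply Rmult_le_compat_r; nra. }
apply Rmult_lt_reg_r with (2 * N * N). nra. lra.
Qed.

Theorem proposition2 (n m : nat)
  (H : ((5 <= n)%nat /\ (6 <= m)%nat) \/ ((7 <= n)%nat /\ (4 <= m)%nat)) :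
  sin (PI / INR m) *
    cosh (arccosh (cos (PI / INR m) / sin (PI / INR n))
          + arccosh (cot (PI / INR m) * cot (PI / INR n)))
  > cosh (ln (INR n)).
Proof.
pose proof PI_RGT_0 as hp0. pose proof PI_lt as hpi.
set (N := INR n). set (M := INR m).
assert (hNM : (5 <= N /\ 6 <= M) \/ (7 <= N /\ 4 <= M)).
{ destruct H as [[h1 h2]|[h1 h2]]; [left|right]; split; unfold N, M;
  (apply le_INR in h1 || idtac); (apply le_INR in h2 || idtac); simpl in *; lra. }
assert (hN : 5 <= N) by lra. assert (hM : 4 <= M) by lra.
set (a := PI / M). set (b := PI / N).
assert (ha0 : 0 < a) by (unfold a; apply Rdiv_lt_0_compat; lra).
assert (hb0 : 0 < b) by (unfold b; apply Rdiv_lt_0_compat; lra).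
assert (ha4 : a <= PI / 4) by (apply div_le_PI; lra).
assert (hb5 : b <= PI / 5) by (apply div_le_PI; lra).
set (c := cos a). set (s := sin a). set (cb := cos b). set (sb := sin b).
assert (hs : 0 < s) by (apply sin_gt_0; lra).
assert (hsb : 0 < sb) by (apply sin_gt_0; lra).
assert (hc : 0 < c) by (apply cos_gt_0; lra).
assert (hcb : 0 < cb) by (apply cos_gt_0; lra).
assert (Ea : s * s + c * c = 1).
{ unfold s, c. pose proof (sin2_cos2 a). unfold Rsqr in *. lra. }
assert (Eb : sb * sb + cb * cb = 1).
{ unfold sb, cb. pose proof (sin2_cos2 b). unfold Rsqr in *. lra. }
assert (hc2 : (5 <= N /\ 3/4 <= c * c) \/ (7 <= N /\ 1/2 <= c * c)).
{ destruct hNM as [[h1 h2]|[h1 h2]]; [left|right]; split; try lra.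
  - assert (a <= PI / 6) by (apply div_le_PI; lra).
    assert (cos (PI/6) <= c) by (apply cos_le_mono; lra).
    rewrite cos_PI6 in H1.
    assert (sqrt 3 * sqrt 3 = 3) by (apply sqrt_sqrt; lra).
    assert (0 <= sqrt 3) by apply sqrt_pos. nra.
  - assert (cos (PI/4) <= c) by (apply cos_le_mono; lra).
    rewrite cos_PI4 in H0.
    assert (sqrt 2 * sqrt 2 = 2) by (apply sqrt_sqrt; lra).
    assert (0 < sqrt 2) by (apply sqrt_lt_R0; lra).
    assert (1 / sqrt 2 * (1 / sqrt 2) = 1/2) by (replace (1 / sqrt 2 * (1 / sqrt 2)) with (1 / (sqrt 2 * sqrt 2)) by (field; lra); rewrite H1; lra).
    assert (0 < 1 / sqrt 2) by (apply Rdiv_lt_0_compat; lra). nra. }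
assert (h1cb : 1 - cb <= b * b / 2) by (apply one_minus_cos_le; lra).
assert (hmain : (1 - cb) * (N + 1) ^ 2 < 2 * N * (c * c)).
{ apply main_ineq; auto. }
set (K := c * c - sb * sb).
assert (hK : 0 < K).
{ unfold K. assert (0 <= 1 - cb) by (unfold cb; pose proof (COS_bound b); lra).
  assert ((1 - cb) * (4 * N) <= (1 - cb) * (N+1)^2).
  { apply Rmult_le_compat_l. lra. assert (0 <= (N-1)*(N-1)) by nra. simpl. lra. }
  assert (2 * (1 - cb) * (2 * N) < c * c * (2 * N)) by lra.
  assert (2 * (1 - cb) < c * c) by (apply Rmult_lt_reg_r with (2 * N); lra).
  assert (sb * sb = (1 - cb) * (1 + cb)) by lra.
  assert ((1 - cb) * (1 + cb) <= (1 - cb) * 2) by (apply Rmult_le_compat_l; lra).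
  lra. }
set (r := sqrt K).
assert (hr : 0 <= r) by apply sqrt_pos.
assert (hrr : r * r = K) by (apply sqrt_sqrt; lra).
assert (hr0 : 0 < r) by (apply sqrt_lt_R0; lra).
assert (hX : sqrt ((c / sb) ^ 2 - 1) = r / sb).
{ apply sqrt_lem_1.
  - replace ((c / sb) ^ 2 - 1) with (K / (sb * sb)) by (unfold K; field; lra).
    left; apply Rdiv_lt_0_compat; nra.
  - left; apply Rdiv_lt_0_compat; lra.
  - replace (r / sb * (r / sb)) with ((r * r) / (sb * sb)) by (field; lra).
    rewrite hrr. unfold K. field. lra. }
assert (KE : c*c*(cb*cb) - s*s*(sb*sb) = K).
{ unfold K. replace (cb*cb) with (1 - sb*sb) by lra. replace (s*s) with (1 - c*c) by lra. ring. }
assert (hY : sqrt ((cot a * cot b) ^ 2 - 1) = r / (s * sb)).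
{ unfold cot. fold c s cb sb. apply sqrt_lem_1.
  - replace ((c / s * (cb / sb)) ^ 2 - 1) with (K / (s * sb * (s * sb))).
    + left; apply Rdiv_lt_0_compat; [lra| repeat apply Rmult_lt_0_compat; lra].
    + rewrite <- KE. field. lra.
  - left; apply Rdiv_lt_0_compat; [lra| repeat apply Rmult_lt_0_compat; lra].
  - replace (r / (s * sb) * (r / (s * sb))) with ((r * r) / (s * sb * (s * sb))) by (field; lra).
    rewrite hrr, <- KE. field. lra. }
unfold arccosh. rewrite hX, hY. unfold cot. fold c s cb sb.
set (P := c / sb + r / sb). set (Q := c / s * (cb / sb) + r / (s * sb)).
assert (hP : 0 < P).
{ unfold P. assert (0 < c / sb) by (apply Rdiv_lt_0_compat; lra).
  assert (0 < r / sb) by (apply Rdiv_lt_0_compat; lra). lra. }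
assert (hQ : 0 < Q).
{ unfold Q. assert (0 < c / s * (cb / sb)) by
    (apply Rmult_lt_0_compat; apply Rdiv_lt_0_compat; lra).
  assert (0 < r / (s * sb)) by (apply Rdiv_lt_0_compat; [lra|apply Rmult_lt_0_compat; lra]). lra. }
assert (hN0 : 0 < N) by lra.
unfold cosh. rewrite <- ln_mult by assumption.
rewrite exp_Ropp, exp_ln by (apply Rmult_lt_0_compat; assumption).
rewrite exp_Ropp, exp_ln by assumption.
assert (IP : / P = c / sb - r / sb).
{ assert (E : P * (c / sb - r / sb) = 1).
  { unfold P. replace ((c / sb + r / sb) * (c / sb - r / sb)) with ((c*c - r*r)/(sb*sb)) by (field; lra).
    rewrite hrr. unfold K. field. lra. }
  rewrite <- (Rmult_1_l (/ P)), <- E. field. lra. }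
assert (IQ : / Q = c / s * (cb / sb) - r / (s * sb)).
{ assert (E : Q * (c / s * (cb / sb) - r / (s * sb)) = 1).
  { unfold Q. replace ((c / s * (cb / sb) + r / (s * sb)) * (c / s * (cb / sb) - r / (s * sb)))
      with ((c*c*(cb*cb) - r*r)/(s*sb*(s*sb))) by (field; lra).
    rewrite hrr, <- KE. field. lra. }
  rewrite <- (Rmult_1_l (/ Q)), <- E. field. lra. }
rewrite Rinv_mult, IP, IQ.
replace (s * ((P * Q + (c / sb - r / sb) * (c / s * (cb / sb) - r / (s * sb))) / 2))
  with ((c * c * cb + r * r) / (sb * sb)) by (unfold P, Q; field; lra).
rewrite hrr. unfold K.
apply Rminus_gt.
replace ((c * c * cb + (c * c - sb * sb)) / (sb * sb) - (N + / N) / 2)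
  with ((2 * N * (c * c) * (1 + cb) - sb * sb * (N + 1) ^ 2) / (2 * N * (sb * sb)))
  by (field; lra).
apply Rdiv_lt_0_compat; [|repeat apply Rmult_lt_0_compat; lra].
assert (E2 : sb * sb = (1 - cb) * (1 + cb)) by lra. rewrite E2.
replace (2 * N * (c * c) * (1 + cb) - (1 - cb) * (1 + cb) * (N + 1) ^ 2)
  with ((1 + cb) * (2 * N * (c * c) - (1 - cb) * (N + 1) ^ 2)) by ring.
apply Rmult_lt_0_compat; lra.
Qed.
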